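(* Let $(r,t)\in\{(2,3),(2,4)\}$, $\alpha=2^r-1=3$, $\beta=2^{t-1}-2^{r-1}$ (so $\beta=2$ or $\beta=6$), and let $\mathcal{C}\subseteq\mathbb{Z}_2^\alpha\times\mathbb{Z}_4^\beta$ be a $\mathbb{Z}_2\mathbb{Z}_4$-additive 1-perfect code. Let $\mathcal{C}'\subseteq\mathbb{Z}_2^{\alpha+1}\times\mathbb{Z}_4^\beta$ be obtained from $\mathcal{C}$ by inserting, at a fixed position of the $\mathbb{Z}_2$ part of every codeword $\mathbf{u}$, an extra binary coordinate equal to $w(\mathbf{u})\bmod 2$. Then $\mathcal{C}'$ is not $\mathbb{Z}_2\mathbb{Z}_4$-cyclic.
   Context: A $\mathbb{Z}_2\mathbb{Z}_4$-additive code is an additive subgroup of $\mathbb{Z}_2^\alpha\times\mathbb{Z}_4^\beta$; vectors are $\mathbf{u}=(u\mid u')$ with $u\in\mathbb{Z}_2^\alpha$, $u'\in\mathbb{Z}_4^\beta$. The weight is $w(\mathbf{u})=w_H(u)+w_L(u')$ (Hamming weight plus Lee weight, Lee weights of $0,1,2,3$ being $0,1,2,1$). The Gray map $\phi:\mathbb{Z}_4\to\mathbb{Z}_2^2$ is $0\mapsto(0,0),1\mapsto(0,1),2\mapsto(1,1),3\mapsto(1,0)$, $\Phi(u\mid u')=(u\mid\phi(u'_1),\dots,\phi(u'_\beta))$. A binary code $C\subseteq\mathbb{Z}_2^n$ is 1-perfect if the Hamming balls of radius 1 around its codewords partition $\mathbb{Z}_2^n$; a $\mathbb{Z}_2\mathbb{Z}_4$-additive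 code is 1-perfect if its Gray image is. With $\sigma(v_1,\dots,v_m)=(v_m,v_1,\dots,v_{m-1})$ and $\sigma(u\mid u')=(\sigma(u)\mid\sigma(u'))$, a code is $\mathbb{Z}_2\mathbb{Z}_4$-cyclic if closed under $\sigma$. *)

(* Defs.v *)
From mathcomp Require Import all_boot all_order all_algebra.
Set Implicit Arguments. Unset Strict Implicit. Unset Printing Implicit Defensive.
Import GRing.Theory.
Local Open Scope ring_scope.

Definition Z2Z4 (a b : nat) : finType := ('rV['Z_2]_a * 'rV['Z_4]_b)%type.

Definition z24add a b (u v : Z2Z4 a b) : Z2Z4 a b := (u.1 + v.1, u.2 + v.2).
Definition z24opp a b (u : Z2Z4 a b) : Z2Z4 a b := (- u.1, - u.2).
Definition z24zero a b : Z2Z4 a b := (0, 0).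

Definition additive_code a b (C : {set Z2Z4 a b}) : Prop :=
  z24zero a b \in C /\
  (forall u v, u \in C -> v \in C -> z24add u v \in C) /\
  (forall u, u \in C -> z24opp u \in C).

Definition wH n (u : 'rV['Z_2]_n) : nat := #|[set j | u ord0 j != 0%R]|.
Definition leeZ4 (x : 'Z_4) : nat :=
  if x == 0 then 0%N else if x == 2%:R then 2%N else 1%N.
Definition wL n (u : 'rV['Z_4]_n) : nat := (\sum_(j < n) leeZ4 (u ord0 j))%N.
Definition wt a b (u : Z2Z4 a b) : nat := (wH u.1 + wL u.2)%N.

Lemma half_idx_lt b (k : 'I_(b * 2)) : (k %/ 2 < b)%N.
Proof. by rewrite ltn_divLR // ltn_ord. Qed.

Definition gray (x : 'Z_4) : 'Z_2 * 'Z_2 :=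
  if x == 0 then (0, 0) else if x == 1 then (0, 1)
  else if x == 2%:R then (1, 1) else (1, 0).

Definition Phi a b (u : Z2Z4 a b) : 'rV['Z_2]_(a + b * 2) :=
  \row_(j < a + b * 2)
    match split j with
    | inl k => u.1 ord0 k
    | inr k => let p := gray (u.2 ord0 (Ordinal (half_idx_lt k))) in
               if odd k then p.2 else p.1
    end.

Definition dH n (x y : 'rV['Z_2]_n) : nat := #|[set j | x ord0 j != y ord0 j]|.
Definition perfect1 n (D : {set 'rV['Z_2]_n}) : Prop :=
  forall x : 'rV['Z_2]_n, exists! c, c \in D /\ (dH x c <= 1)%N.

Definition perfect_code a b (C : {set Z2Z4 a b}) : Prop :=
  perfect1 [set Phi u | u in C].

(* cyclic shift sigma(v_1..v_m) = (v_m, v_1, .., v_{m-1}) *)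
Definition cshift (R : Type) m (v : 'rV[R]_m) : 'rV[R]_m :=
  \row_j v ord0 (ord_pred j).
Definition sigma a b (u : Z2Z4 a b) : Z2Z4 a b := (cshift u.1, cshift u.2).
Definition cyclic_code a b (C : {set Z2Z4 a b}) : Prop :=
  forall u, u \in C -> sigma u \in C.

Definition ins_bit n (i : 'I_n.+1) (c : 'Z_2) (v : 'rV['Z_2]_n) : 'rV['Z_2]_n.+1 :=
  \row_j match unlift i j with None => c | Some k => v ord0 k end.

Definition parity_ext a b (i : 'I_a.+1) (C : {set Z2Z4 a b}) : {set Z2Z4 a.+1 b} :=
  [set ((ins_bit i (wt u)%:R u.1, u.2) : Z2Z4 a.+1 b) | u in C].

(* Main.v *)
Require Import Defs.
From mathcomp Require Import all_boot all_order all_algebra.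
From mathcomp Require Import zify.
Set Implicit Arguments. Unset Strict Implicit. Unset Printing Implicit Defensive.
Import GRing.Theory.
Local Open Scope ring_scope.

Definition Z2s : seq 'Z_2 := [:: 0; 1].
Definition Z4s : seq 'Z_4 := [:: 0; 1; 2%:R; 3%:R].
Lemma memZ2 (x : 'Z_2) : x \in Z2s.
Proof. by case: x => [[|[|m]] Hm]. Qed.
Lemma memZ4 (x : 'Z_4) : x \in Z4s.
Proof. by case: x => [[|[|[|[|m]]]] Hm]. Qed.

Lemma allZ2P (P : 'Z_2 -> bool) : all P Z2s -> forall x, P x.
Proof. by move/allP => H x; apply: H; apply: memZ2. Qed.
Lemma allZ4P (P : 'Z_4 -> bool) : all P Z4s -> forall x, P x.
Proof. by move/allP => H x; apply: H; apply: memZ4. Qed.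


Lemma allZ2P2 (P : 'Z_2 -> 'Z_2 -> bool) : all (fun x => all (P x) Z2s) Z2s -> forall x y, P x y.
Proof. by move=> H x; apply: allZ2P; apply: (allZ2P H). Qed.
Lemma allZ4P2 (P : 'Z_4 -> 'Z_4 -> bool) : all (fun x => all (P x) Z4s) Z4s -> forall x y, P x y.
Proof. by move=> H x; apply: allZ4P; apply: (allZ4P H). Qed.
Ltac finZ := repeat (first [apply: allZ2P | apply: allZ4P | move=> ?]); vm_compute; reflexivity.

Lemma Z2_opp_b : forall x : 'Z_2, - x == x. Proof. apply: allZ2P; by vm_compute. Qed.
Lemma Z2_opp (x : 'Z_2) : - x = x.
Proof. exact/eqP/Z2_opp_b. Qed.
Lemma Z2_ne0_b : forall x y : 'Z_2, (x - y != 0) ==> (x == y + 1).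
Proof. apply: allZ2P2; vm_compute; reflexivity. Qed.
Lemma Z2_ne0 (x y : 'Z_2) : x - y != 0 -> x = y + 1.
Proof. by move=> H; apply/eqP; move/implyP: (Z2_ne0_b x y); apply. Qed.
Lemma lee0_b : forall x : 'Z_4, (leeZ4 x == 0%N) ==> (x == 0).
Proof. apply: allZ4P; vm_compute; reflexivity. Qed.
Lemma lee0 (x : 'Z_4) : leeZ4 x = 0%N -> x = 0.
Proof. by move/eqP=> H; apply/eqP; move/implyP: (lee0_b x); apply. Qed.

Lemma leeN_b : forall x : 'Z_4, leeZ4 (- x) == leeZ4 x.
Proof. apply: allZ4P; vm_compute; reflexivity. Qed.
Lemma leeD2_b : forall x z : 'Z_4, ((leeZ4 (x + z))%:R : 'Z_2) == (leeZ4 x)%:R + (leeZ4 z)%:R.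
Proof. apply: allZ4P2; vm_compute; reflexivity. Qed.
Lemma gray_b : forall x z : 'Z_4,
  (((gray x).1 != (gray z).1) + ((gray x).2 != (gray z).2))%N == leeZ4 (x - z).
Proof. apply: allZ4P2; vm_compute; reflexivity. Qed.
Lemma Z2nat_b : forall x : 'Z_2, (((x != 0%R) : nat)%:R : 'Z_2) == x.
Proof. apply: allZ2P; vm_compute; reflexivity. Qed.

Lemma card_set_sum n (P : pred 'I_n) : #|[set j | P j]| = (\sum_j P j)%N.
Proof.
rewrite -sum1_card big_mkcond /=; apply: eq_bigr => j _; rewrite inE; by case: (P j).
Qed.

Lemma wH_sum n (v : 'rV['Z_2]_n) : wH v = (\sum_j (v ord0 j != 0%R))%N.
Proof. by rewrite /wH card_set_sum. Qed.
Lemma dH_sum n (x y : 'rV['Z_2]_n) : dH x y = (\sum_j (x ord0 j != y ord0 j))%N.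
Proof. by rewrite /dH card_set_sum. Qed.

Lemma wH_eq0 n (v : 'rV['Z_2]_n) : wH v = 0%N -> v = 0.
Proof.
move/eqP; rewrite wH_sum sum_nat_eq0 => /forallP H; apply/rowP => j.
move: (H j) => /=; rewrite eqb0 negbK => /eqP ->; by rewrite mxE.
Qed.

Lemma wL_eq0 n (v : 'rV['Z_4]_n) : wL v = 0%N -> v = 0.
Proof.
move/eqP; rewrite /wL sum_nat_eq0 => /forallP H; apply/rowP => j.
move: (H j) => /= /eqP /lee0 ->; by rewrite mxE.
Qed.

Lemma wt_eq0 a b (u : Z2Z4 a b) : wt u = 0%N -> u = z24zero a b.
Proof.
case: u => u1 u2; rewrite /wt /= => /eqP; rewrite addn_eq0 => /andP [/eqP H1 /eqP H2].
by rewrite (wH_eq0 H1) (wL_eq0 H2).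
Qed.

Lemma wL_par n (v : 'rV['Z_4]_n) : ((wL v)%:R : 'Z_2) = \sum_j ((leeZ4 (v ord0 j))%:R).
Proof. by rewrite /wL natr_sum. Qed.

Lemma wL_parD n (x z : 'rV['Z_4]_n) :
  ((wL (x + z))%:R : 'Z_2) = (wL x)%:R + (wL z)%:R.
Proof.
rewrite !wL_par -big_split /=; apply: eq_bigr => j _; rewrite mxE.
exact/eqP/leeD2_b.
Qed.

Lemma wH_par n (v : 'rV['Z_2]_n) : ((wH v)%:R : 'Z_2) = \sum_j v ord0 j.
Proof. rewrite wH_sum natr_sum; apply: eq_bigr => j _; exact/eqP/Z2nat_b. Qed.

Lemma wHN n (v : 'rV['Z_2]_n) : wH (- v) = wH v.
Proof. rewrite !wH_sum; apply: eq_bigr => j _; by rewrite mxE oppr_eq0. Qed.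

Lemma wLN n (v : 'rV['Z_4]_n) : wL (- v) = wL v.
Proof. rewrite /wL; apply: eq_bigr => j _; rewrite mxE; exact/eqP/leeN_b. Qed.

Lemma split_l m n (k : 'I_m) : split (lshift n k) = inl k.
Proof. exact: (unsplitK (inl _ k)). Qed.
Lemma split_r m n (k : 'I_n) : split (rshift m k) = inr k.
Proof. exact: (unsplitK (inr _ k)). Qed.

Lemma sum_pairs b (H : 'I_b -> bool -> nat) :
  (\sum_(k < b * 2) H (Ordinal (half_idx_lt k)) (odd k) = \sum_(m < b) (H m false + H m true))%N.
Proof.
rewrite (partition_big (fun k : 'I_(b * 2) => Ordinal (half_idx_lt k)) xpredT) //=.
apply: eq_bigr => m _.
have h0 : (2 * m < b * 2)%N by have := ltn_ord m; lia.
have h1 : (2 * m + 1 < b * 2)%N by have := ltn_ord m; lia.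
have e0 : Ordinal (half_idx_lt (Ordinal h0)) == m.
  by apply/eqP/val_inj => /=; lia.
have e1 : Ordinal (half_idx_lt (Ordinal h1)) == m.
  by apply/eqP/val_inj => /=; lia.
rewrite (bigD1 (Ordinal h0)) //= (bigD1 (Ordinal h1)) /=; last first.
  by rewrite e1 andTb; apply/eqP => /(congr1 val) /=; lia.
rewrite big1 ?addn0.
  rewrite (eqP e0) (eqP e1) /=.
  have -> : odd (2 * m) = false by rewrite oddM.
  have -> : odd (2 * m + 1) = true by rewrite oddD oddM.
  by [].
move=> k /andP [/andP [/eqP /(congr1 val) /= Hk /eqP Hk0] /eqP Hk1].
exfalso.
have : (k = 2 * m :> nat \/ k = 2 * m + 1 :> nat)%N by lia.
case=> E; [apply: Hk0 | apply: Hk1]; apply: val_inj => /=; exact: E.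
Qed.

Lemma wt_sub a b (y u : Z2Z4 a b) :
  wt (z24add y (z24opp u)) = (wH (y.1 - u.1) + wL (y.2 - u.2))%N.
Proof. by []. Qed.

Lemma Phi_dH a b (y u : Z2Z4 a b) : dH (Phi y) (Phi u) = wt (z24add y (z24opp u)).
Proof.
rewrite wt_sub dH_sum big_split_ord /=; congr addn.
  rewrite wH_sum; apply: eq_bigr => k _; rewrite !mxE split_l.
  by rewrite subr_eq0.
rewrite /wL.
pose H (m : 'I_b) (o : bool) := ((if o then (gray (y.2 ord0 m)).2 else (gray (y.2 ord0 m)).1)
   != (if o then (gray (u.2 ord0 m)).2 else (gray (u.2 ord0 m)).1)) : nat.
transitivity (\sum_(k < b * 2) H (Ordinal (half_idx_lt k)) (odd k))%N.
  apply: eq_bigr => k _; rewrite !mxE split_r /H; by case: (odd k).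
rewrite sum_pairs; apply: eq_bigr => m _; rewrite /H /= !mxE.
exact/eqP/gray_b.
Qed.

Lemma dH_refl n (p : 'rV['Z_2]_n) : dH p p = 0%N.
Proof. by rewrite dH_sum big1 // => j _; rewrite eqxx. Qed.

Lemma bin_mid n (p q : 'rV['Z_2]_n) : (dH p q <= 2)%N ->
  exists x, (dH x p <= 1)%N /\ (dH x q <= 1)%N.
Proof.
move=> H2; case: (leqP (dH p q) 1) => H1.
  by exists p; rewrite dH_refl.
have HS : (0 < #|[set j | p ord0 j != q ord0 j]|)%N by rewrite -/(dH p q); lia.
case/card_gt0P: HS => j; rewrite inE => Hj.
exists (\row_k (if k == j then q ord0 j else p ord0 k)); split.
  rewrite /dH; apply: (@leq_trans #|[set j]|); last by rewrite cards1.
  apply: subset_leq_card; apply/subsetP => k.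
  rewrite !inE mxE; case: (k =P j) => // _; by rewrite eqxx.
have HS : #|[set j | p ord0 j != q ord0 j] :\ j| = 1%N.
  have := cardsD1 j [set j | p ord0 j != q ord0 j]; rewrite inE Hj -/(dH p q); lia.
rewrite /dH; apply: (@leq_trans #|[set j | p ord0 j != q ord0 j] :\ j|); last by rewrite HS.
apply: subset_leq_card; apply/subsetP => k.
rewrite !inE mxE; case: (k =P j) => [->|Hk]; first by rewrite eqxx.
move=> Hpk; apply/andP; split => //; apply/eqP => E; exact: Hk.
Qed.

Section Perf.
Variables (a b : nat) (C : {set Z2Z4 a b}).
Hypothesis (Cadd : additive_code C) (Cperf : perfect_code C).

Lemma sub0 (u : Z2Z4 a b) : z24add u (z24opp (z24zero a b)) = u.
Proof. by case: u => u1 u2; rewrite /z24add /z24opp /= !oppr0 !addr0. Qed.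

Lemma L1 (u : Z2Z4 a b) : u \in C -> u <> z24zero a b -> (3 <= wt u)%N.
Proof.
move=> Hu Hn; rewrite leqNgt; apply/negP => Hlt.
have Hd : dH (Phi u) (Phi (z24zero a b)) = wt u by rewrite Phi_dH sub0.
have [x [Hx1 Hx2]] : exists x, (dH x (Phi u) <= 1)%N /\ (dH x (Phi (z24zero a b)) <= 1)%N.
  by apply: bin_mid; rewrite Hd; lia.
have [c [_ Hc]] := Cperf x.
have E1 := Hc (Phi u) (conj (imset_f (@Phi a b) Hu) Hx1).
have Hz : z24zero a b \in C by case: Cadd.
have E2 := Hc (Phi (z24zero a b)) (conj (imset_f (@Phi a b) Hz) Hx2).
have : wt u = 0%N by rewrite -Hd -E1 -E2 dH_refl.
by move/wt_eq0.
Qed.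

Lemma L2 (y : Z2Z4 a b) : exists2 u, u \in C & (wt (z24add y (z24opp u)) <= 1)%N.
Proof.
have [c [[/imsetP [u Hu ->] Hd] _]] := Cperf (Phi y).
by exists u => //; rewrite -Phi_dH.
Qed.

Lemma Cadd2 u v : u \in C -> v \in C -> z24add u (z24opp v) \in C.
Proof. case: Cadd => _ [HA HO] Hu Hv; exact: HA _ _ Hu (HO _ Hv). Qed.

End Perf.

Lemma iter_sigma a b k (u : Z2Z4 a b) : iter k (@sigma a b) u = (iter k (@cshift _ a) u.1, iter k (@cshift _ b) u.2).
Proof. elim: k => [|k IH] /=; [by case: u | by rewrite IH]. Qed.

Lemma cshift_iter (R : Type) m k (v : 'rV[R]_m) j :
  (iter k (@cshift R m) v) ord0 j = v ord0 (iter k (@ord_pred m) j).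
Proof.
elim: k j => [|k IH] j //=; rewrite /cshift mxE IH; congr (v _ _).
by rewrite -iterSr /=.
Qed.

Lemma cyc_iter a b (D : {set Z2Z4 a b}) k c : cyclic_code D -> c \in D -> iter k (@sigma a b) c \in D.
Proof. move=> HD Hc; elim: k => [|k IH] //=; exact: HD. Qed.

Lemma wH_full n (v : 'rV['Z_2]_n) : (n <= wH v)%N -> forall k, v ord0 k != 0.
Proof.
move=> Hn k; apply/negP => /eqP Hk.
have : (wH v <= #|[set~ k]|)%N.
  apply: subset_leq_card; apply/subsetP => j; rewrite !inE; apply: contra => /eqP ->.
  by rewrite Hk.
rewrite cardsC1 card_ord; have := ltn_ord k; lia.
Qed.

Definition o0 : 'I_3 := @Ordinal 3 0%N isT.
Definition o1 : 'I_3 := @Ordinal 3 1%N isT.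
Definition o2 : 'I_3 := @Ordinal 3 2%N isT.

Definition insf (i : 'I_4) (p : 'Z_2) (s : seq 'Z_2) (j : 'I_4) : 'Z_2 :=
  if nat_of_ord j == nat_of_ord i then p else nth 0 s (if (j < i)%N then nat_of_ord j else (nat_of_ord j).-1).

Definition seq3 (v : 'rV['Z_2]_3) := [:: v ord0 o0; v ord0 o1; v ord0 o2].

Lemma nth3 (v : 'rV['Z_2]_3) (k : 'I_3) : nth 0 (seq3 v) k = v ord0 k.
Proof. by case: k => [[|[|[|m]]] Hm] //=; congr (v _ _); apply: val_inj. Qed.

Lemma insE (i : 'I_4) p (v : 'rV['Z_2]_3) j : (ins_bit i p v) ord0 j = insf i p (seq3 v) j.
Proof.
rewrite mxE /insf; case: unliftP => [k ->|->]; last by rewrite eqxx.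
have Hn : (nat_of_ord (lift i k) == nat_of_ord i) = false.
  by apply/negbTE; rewrite (inj_eq val_inj) eq_sym neq_lift.
rewrite Hn; have -> : (if (lift i k < i)%N then nat_of_ord (lift i k) else (nat_of_ord (lift i k)).-1) = k.
  rewrite /= /bump; case: (leqP i k) => H.
    by rewrite add1n ltnNge (leq_trans H (leqnSn k)).
  by rewrite add0n H.
by rewrite nth3.
Qed.

Lemma sum3 (v : 'rV['Z_2]_3) : \sum_j v ord0 j = v ord0 o0 + v ord0 o1 + v ord0 o2.
Proof.
rewrite !big_ord_recl big_ord0 addr0 addrA; congr (v _ _ + v _ _ + v _ _); by apply: val_inj.
Qed.

Lemma wH3 (v : 'rV['Z_2]_3) : wH v = ((v ord0 o0 != 0%R) + (v ord0 o1 != 0%R) + (v ord0 o2 != 0%R))%N.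
Proof.
rewrite wH_sum !big_ord_recl big_ord0 addn0 addnA; congr ((v _ _ != _) + (v _ _ != _) + (v _ _ != _))%N;
  by apply: val_inj.
Qed.

Lemma eq3 (v w : 'rV['Z_2]_3) : seq3 v = seq3 w -> v = w.
Proof.
move=> H; apply/rowP => k; rewrite -!nth3; by rewrite H.
Qed.

Definition I4s : seq 'I_4 := [:: (@Ordinal 4 0%N isT); (@Ordinal 4 1%N isT); (@Ordinal 4 2%N isT); (@Ordinal 4 3%N isT)].
Lemma memI4 (x : 'I_4) : x \in I4s.
Proof. by case: x => [[|[|[|[|m]]]] Hm]. Qed.

Definition allZ2 (P : 'Z_2 -> bool) := all P Z2s.

Lemma check1 : all (fun i => allZ2 (fun a0 => allZ2 (fun a1 => allZ2 (fun a2 =>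
  allZ2 (fun b0 => allZ2 (fun b1 => allZ2 (fun b2 => allZ2 (fun L => allZ2 (fun p =>
   (all (fun j => insf i p [:: b0; b1; b2] j == insf i (a0 + a1 + a2 + L) [:: a0; a1; a2] (ord_pred (ord_pred j))) I4s
    && ([&& b0 == a0, b1 == a1 & b2 == a2] || [&& b0 == a0 + 1, b1 == a1 + 1 & b2 == a2 + 1])) ==> (L == 0)))))))))) I4s.
Proof. vm_compute. reflexivity. Qed.

Definition w1 (a0 a1 a2 : 'Z_2) := (((a0 != 0%R) + (a1 != 0%R) + (a2 != 0%R)) == 1)%N.
Definition Q (i : 'I_4) (a0 a1 a2 : 'Z_2) :=
  has (fun p => has (fun fl : bool => all (fun j => insf i p (if fl then [:: a0 + 1; a1 + 1; a2 + 1] else [:: a0; a1; a2]) j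
     == insf i 1 [:: a0; a1; a2] (ord_pred j)) I4s) [:: false; true]) Z2s.

Lemma check2 : all (fun i => allZ2 (fun a0 => allZ2 (fun a1 => allZ2 (fun a2 =>
  allZ2 (fun b0 => allZ2 (fun b1 => allZ2 (fun b2 =>
   [&& w1 a0 a1 a2, w1 b0 b1 b2, Q i a0 a1 a2 & Q i b0 b1 b2] ==> [&& a0 == b0, a1 == b1 & a2 == b2]))))))) I4s.
Proof. vm_compute. reflexivity. Qed.

Definition eqt (a0 a1 a2 b0 b1 b2 : 'Z_2) := [&& a0 == b0, a1 == b1 & a2 == b2].

Lemma check3 : allZ2 (fun a0 => allZ2 (fun a1 => allZ2 (fun a2 =>
  allZ2 (fun b0 => allZ2 (fun b1 => allZ2 (fun b2 =>
  allZ2 (fun c0 => allZ2 (fun c1 => allZ2 (fun c2 =>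
  allZ2 (fun d0 => allZ2 (fun d1 => allZ2 (fun d2 =>
   [&& w1 a0 a1 a2, w1 b0 b1 b2, w1 c0 c1 c2 & w1 d0 d1 d2] ==>
   [|| eqt a0 a1 a2 b0 b1 b2, eqt a0 a1 a2 c0 c1 c2, eqt a0 a1 a2 d0 d1 d2,
       eqt b0 b1 b2 c0 c1 c2, eqt b0 b1 b2 d0 d1 d2 | eqt c0 c1 c2 d0 d1 d2])))))))))))).
Proof. vm_compute. reflexivity. Qed.

Lemma w1E (v : 'rV['Z_2]_3) : wH v = 1%N -> w1 (v ord0 o0) (v ord0 o1) (v ord0 o2).
Proof. by rewrite wH3 /w1 => ->. Qed.

Lemma eqtE (v w : 'rV['Z_2]_3) : eqt (v ord0 o0) (v ord0 o1) (v ord0 o2) (w ord0 o0) (w ord0 o1) (w ord0 o2) -> v = w.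
Proof. by case/and3P => /eqP E0 /eqP E1 /eqP E2; apply: eq3; rewrite /seq3 E0 E1 E2. Qed.

Section Main.
Variables (b : nat) (C : {set Z2Z4 3 b}) (i : 'I_4).
Hypotheses (Cadd : additive_code C) (Cperf : perfect_code C)
  (Ccyc : cyclic_code (parity_ext i C)).

Lemma inD u : u \in C -> ((ins_bit i (wt u)%:R u.1, u.2) : Z2Z4 4 b) \in parity_ext i C.
Proof. by move=> Hu; apply/imsetP; exists u. Qed.

Lemma same2 u u' : u \in C -> u' \in C -> u'.2 = u.2 ->
  u'.1 = u.1 \/ (forall k, u'.1 ord0 k = u.1 ord0 k + 1).
Proof.
move=> Hu Hu' E.
have Hd := Cadd2 Cadd Hu' Hu.
case: (eqVneq (u'.1 - u.1) 0) => [/eqP|Hne].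
  by rewrite subr_eq0 => /eqP; left.
right.
have Hnz : z24add u' (z24opp u) <> z24zero 3 b.
  by move=> [H1 _]; move/eqP: Hne; rewrite /z24add /z24opp /= in H1 *; rewrite H1.
have := L1 Cadd Cperf Hd Hnz; rewrite wt_sub E subrr.
have -> : wL (0 : 'rV['Z_4]_b) = 0%N by apply: big1 => j _; rewrite mxE.
rewrite addn0 => /wH_full H k; apply: Z2_ne0; move: (H k); by rewrite !mxE.
Qed.

Lemma wt_par3 (u : Z2Z4 3 b) : ((wt u)%:R : 'Z_2) = u.1 ord0 o0 + u.1 ord0 o1 + u.1 ord0 o2 + (wL u.2)%:R.
Proof. by rewrite /wt natrD wH_par sum3. Qed.

Hypotheses (Hb1 : forall j : 'I_b, iter b (@ord_pred b) j = j)
  (Hb2 : forall j : 'I_4, iter b (@ord_pred 4) j = ord_pred (ord_pred j)).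

Lemma L3 u : u \in C -> ((wL u.2)%:R : 'Z_2) = 0.
Proof.
move=> Hu; have := cyc_iter b Ccyc (inD Hu); rewrite iter_sigma /=.
case/imsetP => u' Hu' [E1 E2].
have E2' : u'.2 = u.2 by rewrite -E2; apply/rowP => j; rewrite cshift_iter Hb1.
have E1' : forall j, insf i (wt u')%:R (seq3 u'.1) j =
   insf i (u.1 ord0 o0 + u.1 ord0 o1 + u.1 ord0 o2 + (wL u.2)%:R) (seq3 u.1) (ord_pred (ord_pred j)).
  move=> j; rewrite -insE -E1 cshift_iter Hb2 insE wt_par3 //.
have Hs := same2 Hu Hu' E2'.
move: check1 => /allP /(_ i (memI4 i)).
move=> /allP /(_ _ (memZ2 (u.1 ord0 o0))) /allP /(_ _ (memZ2 (u.1 ord0 o1))) /allP /(_ _ (memZ2 (u.1 ord0 o2))).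
move=> /allP /(_ _ (memZ2 (u'.1 ord0 o0))) /allP /(_ _ (memZ2 (u'.1 ord0 o1))) /allP /(_ _ (memZ2 (u'.1 ord0 o2))).
move=> /allP /(_ _ (memZ2 ((wL u.2)%:R))) /allP /(_ _ (memZ2 ((wt u')%:R))) /implyP H.
apply/eqP; apply: H; apply/andP; split.
  by apply/allP => j _; rewrite E1'.
case: Hs => [->|Hc]; first by rewrite !eqxx.
by rewrite !Hc !eqxx orbT.
Qed.

Lemma wL0 : wL (0 : 'rV['Z_4]_b) = 0%N.
Proof. by apply: big1 => j _; rewrite mxE. Qed.

Lemma Lx (x : 'rV['Z_4]_b) : wL x = 2%N -> exists a : 'rV['Z_2]_3, wH a = 1%N /\ ((a, x) : Z2Z4 3 b) \in C.
Proof.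
move=> Hx.
have [u Hu] := L2 Cperf (((0 : 'rV['Z_2]_3), x) : Z2Z4 3 b).
rewrite wt_sub /= sub0r wHN => Hle.
have Hpar := L3 Hu.
case: (eqVneq (wL (x - u.2)) 0%N) => [H0|Hne].
  have /eqP : x - u.2 = 0 by exact: wL_eq0.
  rewrite subr_eq0 => /eqP Ex.
  have Hnz : u <> z24zero 3 b.
    move=> Hz; move: Hx; rewrite Ex Hz /= wL0 //.
  have := L1 Cadd Cperf Hu Hnz; rewrite /wt -Ex Hx => H3.
  exists u.1; split.
    move: Hle; rewrite H0 addn0 => Hle; apply/eqP; rewrite eqn_leq Hle /=.
    by move: H3; rewrite -[X in (X < _)%N]/(0 + 2)%N ltn_add2r.
  by rewrite Ex; case: u Hu {Hle Hpar Hnz H3 Ex H0} => u1 u2.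
have H1 : wL (x - u.2) = 1%N.
  have := leq_trans (leq_addl _ _) Hle; move: Hne; case: (wL (x - u.2)) => [|[|n]] //.
exfalso.
have : ((wL x)%:R : 'Z_2) = (wL (x - u.2))%:R + (wL u.2)%:R by rewrite -wL_parD subrK.
by rewrite Hx H1 Hpar addr0.
Qed.

Lemma FactF a a' (x x' : 'rV['Z_4]_b) : ((a, x) : Z2Z4 3 b) \in C -> ((a', x') : Z2Z4 3 b) \in C ->
  wL (x - x') = 2%N -> a <> a'.
Proof.
move=> H H' Hw Ea.
have Hd := Cadd2 Cadd H H'.
have Hnz : z24add (a, x) (z24opp (a', x')) <> z24zero 3 b.
  by move=> [_ E]; move: Hw; rewrite /= in E; rewrite E wL0.
have := L1 Cadd Cperf Hd Hnz; rewrite wt_sub /= Hw Ea subrr.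
have -> : wH (0 : 'rV['Z_2]_3) = 0%N by rewrite wH_sum big1 // => j _; rewrite mxE eqxx.
by [].
Qed.

Lemma G (a : 'rV['Z_2]_3) (x : 'rV['Z_4]_b) : ((a, x) : Z2Z4 3 b) \in C -> wH a = 1%N -> wL x = 2%N ->
  ((a, cshift x) : Z2Z4 3 b) \in C -> Q i (a ord0 o0) (a ord0 o1) (a ord0 o2).
Proof.
move=> Ha Hw Hx Ha'.
have := Ccyc (inD Ha); rewrite /sigma /=.
case/imsetP => u' Hu' [E1 E2].
have Hp : ((wt ((a, x) : Z2Z4 3 b))%:R : 'Z_2) = 1.
  by rewrite /wt /= Hw Hx; apply/eqP; vm_compute.
rewrite Hp in E1.
have Hs := same2 Ha' Hu' (esym E2).
apply/hasP; exists ((wt u')%:R); first exact: memZ2.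
apply/hasP; case: Hs => Hs; rewrite /= in Hs.
  exists false; first by [].
  apply/allP => j _; apply/eqP; rewrite -/(seq3 a) -{1}Hs -!insE -E1 /cshift mxE //.
exists true; first by [].
apply/allP => j _; apply/eqP; rewrite -/(seq3 a).
have -> : [:: a ord0 o0 + 1; a ord0 o1 + 1; a ord0 o2 + 1] = seq3 u'.1 by rewrite /seq3 !Hs.
by rewrite -!insE -E1 /cshift mxE.
Qed.
End Main.

Definition xv (c0 c1 c2 : 'Z_4) : 'rV['Z_4]_6 :=
  \row_(j < 6) (if (j == 0%N :> nat) then c0 else if (j == 1%N :> nat) then c1 else if (j == 2%N :> nat) then c2 else 0).

Lemma xvB c0 c1 c2 d0 d1 d2 : xv c0 c1 c2 - xv d0 d1 d2 = xv (c0 - d0) (c1 - d1) (c2 - d2).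
Proof. apply/rowP => j; rewrite !mxE; case: ifP => _; [|case: ifP => _; [|case: ifP => _]]; by rewrite ?subrr. Qed.

Lemma wL_xv c0 c1 c2 : wL (xv c0 c1 c2) = (leeZ4 c0 + leeZ4 c1 + leeZ4 c2)%N.
Proof. rewrite /wL !big_ord_recl big_ord0 !mxE /=; rewrite /leeZ4 !eqxx; lia. Qed.

Lemma case6 (C : {set Z2Z4 3 6}) (i : 'I_4) :
  additive_code C -> perfect_code C -> ~ cyclic_code (parity_ext i C).
Proof.
move=> Cadd Cperf Ccyc.
have Hb1 : forall j : 'I_6, iter 6 (@ord_pred 6) j = j.
  by case=> [[|[|[|[|[|[|m]]]]]] Hm] //; apply: val_inj.
have Hb2 : forall j : 'I_4, iter 6 (@ord_pred 4) j = ord_pred (ord_pred j).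
  by case=> [[|[|[|[|m]]]] Hm] //; apply: val_inj.
have W : forall c0 c1 c2, (leeZ4 c0 + leeZ4 c1 + leeZ4 c2 = 2)%N -> wL (xv c0 c1 c2) = 2%N.
  by move=> c0 c1 c2 H; rewrite wL_xv H.
have [a1 [H1 M1]] := Lx Cadd Cperf Ccyc Hb1 Hb2 (W 1 1 0 (erefl _)).
have [a2 [H2 M2]] := Lx Cadd Cperf Ccyc Hb1 Hb2 (W 1 (-1) 0 (erefl _)).
have [a3 [H3 M3]] := Lx Cadd Cperf Ccyc Hb1 Hb2 (W 1 0 1 (erefl _)).
have [a4 [H4 M4]] := Lx Cadd Cperf Ccyc Hb1 Hb2 (W 1 0 (-1) (erefl _)).
have F := FactF Cadd Cperf.
have D12 := F _ _ _ _ M1 M2 (etrans (congr1 _ (xvB _ _ _ _ _ _)) (W (1 - 1) (1 - (-1)) (0 - 0) (erefl _))).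
have D13 := F _ _ _ _ M1 M3 (etrans (congr1 _ (xvB _ _ _ _ _ _)) (W (1 - 1) (1 - 0) (0 - 1) (erefl _))).
have D14 := F _ _ _ _ M1 M4 (etrans (congr1 _ (xvB _ _ _ _ _ _)) (W (1 - 1) (1 - 0) (0 - (-1)) (erefl _))).
have D23 := F _ _ _ _ M2 M3 (etrans (congr1 _ (xvB _ _ _ _ _ _)) (W (1 - 1) ((-1) - 0) (0 - 1) (erefl _))).
have D24 := F _ _ _ _ M2 M4 (etrans (congr1 _ (xvB _ _ _ _ _ _)) (W (1 - 1) ((-1) - 0) (0 - (-1)) (erefl _))).
have D34 := F _ _ _ _ M3 M4 (etrans (congr1 _ (xvB _ _ _ _ _ _)) (W (1 - 1) (0 - 0) (1 - (-1)) (erefl _))).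
move: check3.
move=> /allP /(_ _ (memZ2 (a1 ord0 o0))) /allP /(_ _ (memZ2 (a1 ord0 o1))) /allP /(_ _ (memZ2 (a1 ord0 o2))) /allP /(_ _ (memZ2 (a2 ord0 o0))) /allP /(_ _ (memZ2 (a2 ord0 o1))) /allP /(_ _ (memZ2 (a2 ord0 o2))) /allP /(_ _ (memZ2 (a3 ord0 o0))) /allP /(_ _ (memZ2 (a3 ord0 o1))) /allP /(_ _ (memZ2 (a3 ord0 o2))) /allP /(_ _ (memZ2 (a4 ord0 o0))) /allP /(_ _ (memZ2 (a4 ord0 o1))) /allP /(_ _ (memZ2 (a4 ord0 o2))) /implyP H.
have := H ltac:(by rewrite (w1E H1) (w1E H2) (w1E H3) (w1E H4)).
case/or4P => [/eqtE //|/eqtE //|/eqtE //|]; case/or3P => /eqtE //.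
Qed.

Definition yv (c0 c1 : 'Z_4) : 'rV['Z_4]_2 := \row_(j < 2) (if (j == 0%N :> nat) then c0 else c1).

Lemma yvB c0 c1 d0 d1 : yv c0 c1 - yv d0 d1 = yv (c0 - d0) (c1 - d1).
Proof. apply/rowP => j; rewrite !mxE; by case: ifP. Qed.
Lemma yvN c0 c1 : - yv c0 c1 = yv (- c0) (- c1).
Proof. apply/rowP => j; rewrite !mxE; by case: ifP. Qed.
Lemma wL_yv c0 c1 : wL (yv c0 c1) = (leeZ4 c0 + leeZ4 c1)%N.
Proof. by rewrite /wL !big_ord_recl big_ord0 !mxE /= addn0. Qed.
Lemma cshift_yv c0 c1 : cshift (yv c0 c1) = yv c1 c0.
Proof. apply/rowP => j; rewrite !mxE; by case: j => [[|[|m]] Hm]. Qed.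

Lemma case2 (C : {set Z2Z4 3 2}) (i : 'I_4) :
  additive_code C -> perfect_code C -> ~ cyclic_code (parity_ext i C).
Proof.
move=> Cadd Cperf Ccyc.
have Hb1 : forall j : 'I_2, iter 2 (@ord_pred 2) j = j.
  by case=> [[|[|m]] Hm] //; apply: val_inj.
have Hb2 : forall j : 'I_4, iter 2 (@ord_pred 4) j = ord_pred (ord_pred j) by [].
have W : forall c0 c1, (leeZ4 c0 + leeZ4 c1 = 2)%N -> wL (yv c0 c1) = 2%N.
  by move=> c0 c1 H; rewrite wL_yv H.
have [a1 [H1 M1]] := Lx Cadd Cperf Ccyc Hb1 Hb2 (W 1 1 (erefl _)).
have [a2 [H2 M2]] := Lx Cadd Cperf Ccyc Hb1 Hb2 (W 1 (-1) (erefl _)).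
have D := FactF Cadd Cperf M1 M2 (etrans (congr1 _ (yvB _ _ _ _)) (W (1 - 1) (1 - -1) (erefl _))).
have Q1 := G Cadd Cperf Ccyc M1 H1 (W 1 1 (erefl _)) ltac:(by rewrite cshift_yv).
have M2' : ((a2, cshift (yv 1 (-1))) : Z2Z4 3 2) \in C.
  case: Cadd => _ [_ HO]; have := HO _ M2; rewrite /z24opp /= yvN cshift_yv opprK.
  by have -> : - a2 = a2 by apply/rowP => j; rewrite mxE Z2_opp.
have Q2 := G Cadd Cperf Ccyc M2 H2 (W 1 (-1) (erefl _)) M2'.
apply: D; apply: eqtE.
move: check2 => /allP /(_ i (memI4 i)).
move=> /allP /(_ _ (memZ2 (a1 ord0 o0))) /allP /(_ _ (memZ2 (a1 ord0 o1))) /allP /(_ _ (memZ2 (a1 ord0 o2))).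
move=> /allP /(_ _ (memZ2 (a2 ord0 o0))) /allP /(_ _ (memZ2 (a2 ord0 o1))) /allP /(_ _ (memZ2 (a2 ord0 o2))).
move=> /implyP; apply; by rewrite (w1E H1) (w1E H2) Q1 Q2.
Qed.

Local Close Scope ring_scope.

Theorem lemma4p1 (r t : nat) :
  (r, t) = (2, 3) \/ (r, t) = (2, 4) ->
  forall (C : {set Z2Z4 (2 ^ r - 1) (2 ^ (t - 1) - 2 ^ (r - 1))})
         (i : 'I_(2 ^ r - 1).+1),
  additive_code C -> perfect_code C ->
  ~ cyclic_code (parity_ext i C).
Proof.
case=> [[-> ->]|[-> ->]] C i.
  exact (@case2 C i).
exact (@case6 C i).
Qed.
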